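(* Assume (A3) and (A4), and let $\rho\in[0,\epsilon]$. Let $x\in R\mathbb{B}$ and $s\in\partial g(x)$ with $s\ne0$, and set $$x^+=\Pi_{R\mathbb{B}}\Big(x-\frac{[g(x)+\rho]_+}{\|s\|^2}s\Big).$$ Then $$\mathrm{dist}^2(x^+,\mathcal{X}_\rho)\le\Big(1-\frac{\sigma^2}{G_g^2}\Big)\mathrm{dist}^2(x,\mathcal{X}_\rho).$$
   Context: Let $g:\mathbb{R}^d\to\mathbb{R}$ be convex with subdifferential $\partial g(x)$. Let $R>0$ and $\mathbb{B}=\{x\in\mathbb{R}^d:\|x\|\le1\}$, with $\|\cdot\|$ the Euclidean norm. Set $\mathcal{X}=\{x:g(x)\le0\}$ and assume $\mathcal{X}\subseteq R\mathbb{B}$. For $\rho\ge0$ set $\mathcal{X}_\rho=\{x:g(x)\le-\rho\}$. $\Pi_{\mathcal{Y}}$ denotes Euclidean projection onto a closed convex set $\mathcal{Y}$. Write $\mathrm{dist}(z,\mathcal{Y})=\min_{y\in\mathcal{Y}}\|z-y\|$ and $[a]_+=\max(a,0)$. Assumptions: (A3) there is $G_g>0$ with $\|s\|\le G_g$ for all $s\in\partial g(x)$ and all $x\in R\mathbb{B}$; (A4) there are $\sigma,\epsilon>0$ such that $\{x:g(x)=-\epsilon\}$ is nonempty and $\|s\|\ge\sigma$ for all $s\in\partial g(x)$ whenever $g(x)=-\epsilon$. *)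

(* Defs.v *)
From HB Require Import structures.
From mathcomp Require Import all_boot all_order all_algebra.
From mathcomp Require Import all_classical all_reals.
Set Implicit Arguments. Unset Strict Implicit. Unset Printing Implicit Defensive.
Import Order.TTheory GRing.Theory Num.Theory.
Local Open Scope ring_scope.
Local Open Scope classical_set_scope.

Section Defs.
Variables (R : realType) (d : nat).
Implicit Types (u v x y s : 'rV[R]_d).

Definition dotv u v : R := \sum_(i < d) u ord0 i * v ord0 i.
Definition enorm u : R := Num.sqrt (dotv u u).

Definition convex_fun (g : 'rV[R]_d -> R) : Prop :=
  forall x y (t : R), 0 <= t -> t <= 1 ->
    g ((1 - t) *: x + t *: y) <= (1 - t) * g x + t * g y.

Definition subgrad (g : 'rV[R]_d -> R) x s : Prop :=
  forall y, g x + dotv s (y - x) <= g y.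

Definition eball (r : R) : set 'rV[R]_d := [set x | enorm x <= r].

Definition sublevel (g : 'rV[R]_d -> R) (c : R) : set 'rV[R]_d := [set x | g x <= c].

Definition is_proj (Y : set 'rV[R]_d) z p : Prop :=
  Y p /\ forall y, Y y -> enorm (z - p) <= enorm (z - y).

Definition edist z (Y : set 'rV[R]_d) : R := inf [set enorm (z - y) | y in Y].

End Defs.

Definition pospart {R : realType} (a : R) : R := Num.max a 0.

(* Main.v *)
Require Import Defs.
From HB Require Import structures.
From mathcomp Require Import all_boot all_order all_algebra.
From mathcomp Require Import all_classical all_reals.
From mathcomp Require Import all_analysis.
From mathcomp Require Import ring lra.
Import Order.TTheory GRing.Theory Num.Theory.
Import numFieldNormedType.Exports.
Local Open Scope ring_scope.
Import Defs.

Section Basics.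
Variables (R : realType) (d : nat).
Implicit Types (u v w x y : 'rV[R]_d).

Lemma dotvC u v : dotv u v = dotv v u.
Proof. by apply: eq_bigr => i _; rewrite mulrC. Qed.

Lemma dotvDl u v w : dotv (u + v) w = dotv u w + dotv v w.
Proof. by rewrite /dotv -big_split; apply: eq_bigr => i _; rewrite !mxE mulrDl. Qed.

Lemma dotvZl a u v : dotv (a *: u) v = a * dotv u v.
Proof. by rewrite /dotv mulr_sumr; apply: eq_bigr => i _; rewrite !mxE mulrA. Qed.

Lemma dotvNl u v : dotv (- u) v = - dotv u v.
Proof. by rewrite -scaleN1r dotvZl mulN1r. Qed.

Lemma dotvDr u v w : dotv w (u + v) = dotv w u + dotv w v.
Proof. by rewrite dotvC dotvDl !(dotvC w). Qed.
Lemma dotvZr a u v : dotv v (a *: u) = a * dotv v u.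
Proof. by rewrite dotvC dotvZl dotvC. Qed.
Lemma dotvNr u v : dotv v (- u) = - dotv v u.
Proof. by rewrite dotvC dotvNl dotvC. Qed.
Lemma dotvBl u v w : dotv (u - v) w = dotv u w - dotv v w.
Proof. by rewrite dotvDl dotvNl. Qed.
Lemma dotvBr u v w : dotv w (u - v) = dotv w u - dotv w v.
Proof. by rewrite dotvDr dotvNr. Qed.

Lemma msq_ge0 (a : R) : 0 <= a * a.
Proof. by rewrite -expr2 sqr_ge0. Qed.

Lemma dotvv_ge0 u : 0 <= dotv u u.
Proof. by apply: sumr_ge0 => i _; exact: msq_ge0. Qed.

Lemma dotvv_eq0 u : dotv u u = 0 -> u = 0.
Proof.
move=> /eqP; rewrite psumr_eq0 => [/allP H|i _]; last exact: msq_ge0.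
apply/rowP => i; rewrite mxE; apply/eqP.
by have := H i (mem_index_enum _); rewrite implyTb mulf_eq0 orbb.
Qed.

Lemma enorm_ge0 u : 0 <= enorm u.
Proof. exact: sqrtr_ge0. Qed.

Lemma enorm_sq u : enorm u ^+ 2 = dotv u u.
Proof. by rewrite /enorm sqr_sqrtr // dotvv_ge0. Qed.

Lemma enorm_eq0 u : enorm u = 0 -> u = 0.
Proof. by move=> h; apply: dotvv_eq0; rewrite -enorm_sq h expr0n. Qed.

Lemma enormZ a u : enorm (a *: u) = `|a| * enorm u.
Proof.
by rewrite /enorm dotvZl dotvZr mulrA -expr2 sqrtrM ?sqr_ge0 // sqrtr_sqr.
Qed.

Lemma enormN u : enorm (- u) = enorm u.
Proof. by rewrite -scaleN1r enormZ normrN normr1 mul1r. Qed.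

Lemma enormB u v : enorm (u - v) = enorm (v - u).
Proof. by rewrite -enormN opprB. Qed.

Lemma enormD_sq u v :
  enorm (u + v) ^+ 2 = enorm u ^+ 2 + 2 * dotv u v + enorm v ^+ 2.
Proof. rewrite !enorm_sq !dotvDl !dotvDr (dotvC v u); ring. Qed.

Lemma enormB_sq u v :
  enorm (u - v) ^+ 2 = enorm u ^+ 2 - 2 * dotv u v + enorm v ^+ 2.
Proof. by rewrite enormD_sq enormN dotvNr; ring. Qed.

Lemma cauchy_schwarz u v : dotv u v <= enorm u * enorm v.
Proof.
set a := enorm u; set b := enorm v.
have a0 : 0 <= a by exact: enorm_ge0.
have b0 : 0 <= b by exact: enorm_ge0.
have [ab0|ab0] := eqVneq (a * b) 0.
  move: ab0 => /eqP; rewrite mulf_eq0 => /orP[] /eqP h.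
    by rewrite (enorm_eq0 _ h) /dotv big1 ?mulr_ge0 // => i _; rewrite mxE mul0r.
  by rewrite (enorm_eq0 _ h) /dotv big1 ?mulr_ge0 // => i _; rewrite mxE mulr0.
have h := enorm_ge0 (b *: u - a *: v).
have := sqr_ge0 (enorm (b *: u - a *: v)).
rewrite enormB_sq !enormZ dotvZl dotvZr (ger0_norm a0) (ger0_norm b0) -/a -/b => H.
have abp : 0 < a * b by rewrite lt_def ab0 mulr_ge0.
nra.
Qed.

Lemma enorm_triangle u v : enorm (u + v) <= enorm u + enorm v.
Proof.
have h1 := enorm_ge0 (u + v).
have h2 := addr_ge0 (enorm_ge0 u) (enorm_ge0 v).
rewrite -(ler_pXn2r (n:=2)) ?nnegrE //.
rewrite enormD_sq; have := cauchy_schwarz u v; nra.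
Qed.

End Basics.
Arguments dotvC {R d}. Arguments dotvDl {R d}. Arguments dotvZl {R d}. Arguments dotvNl {R d}.
Arguments dotvDr {R d}. Arguments dotvZr {R d}. Arguments dotvNr {R d}. Arguments dotvBl {R d}.
Arguments dotvBr {R d}. Arguments dotvv_ge0 {R d}. Arguments dotvv_eq0 {R d}. Arguments enorm_ge0 {R d}.
Arguments enorm_sq {R d}. Arguments enorm_eq0 {R d}. Arguments enormZ {R d}. Arguments enormN {R d}.
Arguments enormB {R d}. Arguments enormD_sq {R d}. Arguments enormB_sq {R d}.
Arguments cauchy_schwarz {R d}. Arguments enorm_triangle {R d}.
Section Near.
Variables (R : realType) (d : nat).
Implicit Types (u v w x y z p : 'rV[R]_d).

Lemma sq_le {a b : R} : 0 <= a -> a <= b -> a ^+ 2 <= b ^+ 2.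
Proof. move=> a0 ab; rewrite ler_pXn2r // nnegrE //; exact: le_trans ab. Qed.

Lemma sq_le_inv {a b : R} : 0 <= b -> a ^+ 2 <= b ^+ 2 -> a <= b.
Proof. move=> b0 h; have [a0|a0] := leP 0 a; first by rewrite -(ler_pXn2r (n:=2)). 
  by apply: le_trans b0; apply: ltW. Qed.

Lemma comb_eq p y (t : R) : p + t *: (y - p) = (1 - t) *: p + t *: y.
Proof. by rewrite scalerBr scalerBl scale1r addrA addrAC. Qed.

Lemma nearest_var (C : set 'rV[R]_d) z p :
  (forall y, C y -> forall t, 0 < t -> t <= 1 -> C (p + t *: (y - p))) ->
  (forall y, C y -> enorm (z - p) <= enorm (z - y)) ->
  forall y, C y -> dotv (z - p) (y - p) <= 0.
Proof.
move=> Cconv near y Cy.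
set a := dotv (z - p) (y - p); set b := enorm (y - p) ^+ 2.
have b0 : 0 <= b by exact: sqr_ge0.
rewrite leNgt; apply/negP => a0.
set t := a / (a + b).
have ab0 : 0 < a + b by lra.
have t0 : 0 < t by apply: divr_gt0.
have t1 : t <= 1 by rewrite ler_pdivrMr // mul1r; lra.
have tab : t * (a + b) = a by rewrite /t mulrVK // unitfE gt_eqF.
have := sq_le (enorm_ge0 _) (near _ (Cconv y Cy t t0 t1)).
have -> : z - (p + t *: (y - p)) = (z - p) - t *: (y - p) by rewrite opprD addrA.
rewrite [X in _ <= X]enormB_sq enormZ dotvZr (ger0_norm (ltW t0)) exprMn -/a -/b => H.
nra.
Qed.

Lemma nearest_nonexp (C : set 'rV[R]_d) z p :
  (forall y, C y -> forall t, 0 < t -> t <= 1 -> C (p + t *: (y - p))) ->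
  (forall y, C y -> enorm (z - p) <= enorm (z - y)) ->
  forall y, C y -> enorm (p - y) <= enorm (z - y).
Proof.
move=> Cconv near y Cy; apply: sq_le_inv; first exact: enorm_ge0.
have H := nearest_var _ _ _ Cconv near _ Cy.
have -> : z - y = (z - p) + (p - y) by rewrite addrA subrK.
rewrite [X in _ <= X]enormD_sq.
have -> : dotv (z - p) (p - y) = - dotv (z - p) (y - p) by rewrite -dotvNr opprB.
have := sqr_ge0 (enorm (z - p)); lra.
Qed.

End Near.
Arguments sq_le {R a b}. Arguments sq_le_inv {R a b}.
Arguments nearest_var {R d}. Arguments nearest_nonexp {R d}. Arguments comb_eq {R d}.
Section Norms.
Variables (R : realType) (d : nat).
Implicit Types (u v w x y z p h : 'rV[R]_d).

Lemma le_sum1 (F : 'I_d -> R) j : (forall i, 0 <= F i) -> F j <= \sum_i F i.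
Proof.
move=> F0; rewrite (bigD1 j) //= lerDl; exact: sumr_ge0.
Qed.

Lemma entry_le_mxnorm v i : `|v ord0 i| <= `|v|.
Proof.
have -> : `|v| = mx_norm v by [].
rewrite mx_normrE; apply/bigmax_geP; right => /=.
by exists (ord0, i).
Qed.

Lemma mxnorm_le_enorm v : `|v| <= enorm v.
Proof.
have -> : `|v| = mx_norm v by [].
rewrite mx_normrE; apply/bigmax_leP; split => /=.
  exact: enorm_ge0.
move=> [i j] _ /=; rewrite (ord1 i).
apply: sq_le_inv; first exact: enorm_ge0.
rewrite enorm_sq real_normK ?num_real //.
rewrite /dotv (le_sum1 (fun k => v ord0 k * v ord0 k) j) ?expr2 //.
by move=> k; rewrite -expr2 sqr_ge0.
Qed.

Lemma l1_le v : \sum_i `|v ord0 i| <= d%:R * `|v|.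
Proof.
apply: le_trans (ler_sum _ (fun i _ => entry_le_mxnorm v i)) _.
by rewrite sumr_const card_ord mulr_natl.
Qed.

Lemma enorm_le_l1 v : enorm v <= \sum_i `|v ord0 i|.
Proof.
apply: sq_le_inv; first by apply: sumr_ge0 => i _.
rewrite enorm_sq /dotv expr2 mulr_suml; apply: ler_sum => i _.
apply: le_trans (ler_norm _) _; rewrite normrM ler_wpM2l //; by apply: (le_sum1 (fun k => `|v ord0 k|)) => k.
Qed.

Lemma enorm_le_mx v : enorm v <= d%:R * `|v|.
Proof. exact: le_trans (enorm_le_l1 v) (l1_le v). Qed.

End Norms.
Arguments le_sum1 {R d}. Arguments entry_le_mxnorm {R d}. Arguments mxnorm_le_enorm {R d}.
Arguments l1_le {R d}. Arguments enorm_le_l1 {R d}. Arguments enorm_le_mx {R d}.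
Section Convex.
Variables (R : realType) (d : nat) (g : 'rV[R]_d -> R).
Hypothesis Hconv : convex_fun g.
Implicit Types (u v w x y z p h : 'rV[R]_d).

Lemma jensen_star (M : R) p (q : 'I_d -> 'rV[R]_d) (r : seq 'I_d) :
  g p <= M -> (forall i, g (p + q i) <= M) ->
  forall lam : 'I_d -> R, (forall i, 0 <= lam i) -> \sum_(i <- r) lam i <= 1 ->
  g (p + \sum_(i <- r) lam i *: q i) <= M.
Proof.
move=> gp gq; elim: r => [|i r IH] lam l0 ls.
  by rewrite big_nil addr0.
rewrite big_cons in ls; rewrite big_cons.
set l := lam i in ls *; set S := \sum_(j <- r) lam j *: q j.
have mu0 : 0 <= \sum_(j <- r) lam j by apply: sumr_ge0.
have li0 : 0 <= l := l0 i.
have [hl|hl] := ltP l 1.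
  have l1 : 1 - l != 0 by rewrite subr_eq0 eq_sym lt_eqF.
  have l1p : 0 < 1 - l by rewrite subr_gt0.
  pose lam' j := lam j / (1 - l).
  have lam'0 : forall j, 0 <= lam' j by move=> j; rewrite /lam' divr_ge0 // ltW.
  have lam's : \sum_(j <- r) lam' j <= 1.
    rewrite /lam' -mulr_suml ler_pdivrMr // mul1r; lra.
  have H := IH lam' lam'0 lam's.
  have E1 : \sum_(j <- r) lam' j *: q j = (1 - l)^-1 *: S.
    rewrite /S scaler_sumr; apply: eq_bigr => j _.
    by rewrite /lam' scalerA mulrC.
  rewrite E1 in H.
  have -> : p + (l *: q i + S) =
      (1 - (l)) *: (p + (1 - l)^-1 *: S) + l *: (p + q i).
    apply/rowP => j; rewrite !mxE; field; exact: l1.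
  apply: le_trans (Hconv _ _ _ li0 (ltW hl)) _.
  have := gq i.
  have : (1 - l) * g (p + (1 - l)^-1 *: S) <= (1 - l) * M.
    by apply: ler_wpM2l; [exact: ltW l1p | exact: H].
  nra.
have l1 : l = 1 by apply/eqP; rewrite eq_le hl; lra.
have mu00 : \sum_(j <- r) lam j = 0 by apply/eqP; rewrite eq_le mu0; lra.
have S0 : S = 0.
  rewrite /S big1_seq // => j /andP[_ jr].
  have /eqP := mu00; rewrite psumr_eq0 // => /allP /(_ j jr) /eqP ->.
  by rewrite scale0r.
by rewrite S0 addr0 l1 scale1r.
Qed.

Definition cpM p : R :=
  `|g p| + \sum_i (`|g (p + 'e_i)| + `|g (p - 'e_i)|).

Lemma cpM_ge p : g p <= cpM p /\ (forall i, g (p + 'e_i) <= cpM p)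
  /\ (forall i, g (p - 'e_i) <= cpM p).
Proof.
have s0 : 0 <= \sum_i (`|g (p + 'e_i)| + `|g (p - 'e_i)|).
  by apply: sumr_ge0 => i _; rewrite addr_ge0.
split; first by apply: le_trans (ler_norm _) _; rewrite lerDl.
have F0 : forall k, 0 <= `|g (p + 'e_k)| + `|g (p - 'e_k)|.
  by move=> k; rewrite addr_ge0.
split=> i.
  have := @le_sum1 R d (fun i => `|g (p + 'e_i)| + `|g (p - 'e_i)|) i F0.
  have := ler_norm (g (p + 'e_i)); have := normr_ge0 (g p).
  have := normr_ge0 (g (p - 'e_i)); rewrite /cpM /=; lra.
have := @le_sum1 R d (fun i => `|g (p + 'e_i)| + `|g (p - 'e_i)|) i F0.
have := ler_norm (g (p - 'e_i)); have := normr_ge0 (g p).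
have := normr_ge0 (g (p + 'e_i)); rewrite /cpM /=; lra.
Qed.

Lemma cp_bound p h : \sum_i `|h ord0 i| <= 1 -> g (p + h) <= cpM p.
Proof.
move=> hs; have [gp [gpe gme]] := cpM_ge p.
pose q i := if 0 <= h ord0 i then ('e_i : 'rV[R]_d) else - 'e_i.
have hq : h = \sum_i `|h ord0 i| *: q i.
  rewrite {1}[h]row_sum_delta; apply: eq_bigr => i _.
  rewrite /q; case: ifP => hi.
    by rewrite ger0_norm.
  by rewrite ltr0_norm ?ltNge ?hi // scalerN scaleNr opprK.
rewrite hq; apply: jensen_star => //.
by move=> i; rewrite /q; case: ifP.
Qed.

Lemma lsc_lower p h : \sum_i `|h ord0 i| <= 1 ->
  g p - (\sum_i `|h ord0 i|) * (cpM p - g p) <= g (p + h).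
Proof.
move=> ht; set t := \sum_i `|h ord0 i|.
have t0 : 0 <= t by apply: sumr_ge0.
have [tz|tp] := eqVneq t 0.
  have h0 : h = 0.
    apply/rowP => i; rewrite mxE; apply/eqP; rewrite -normr_eq0; apply/eqP.
    exact: (psumr_eq0P _ tz).
  by rewrite tz mul0r subr0 h0 addr0.
have tpos : 0 < t by rewrite lt_def tp.
set b := p + (- t^-1) *: h.
have gb : g b <= cpM p.
  apply: cp_bound.
  under eq_bigr do rewrite mxE normrM normrN.
  rewrite -mulr_sumr -/t ger0_norm ?invr_ge0 // mulVf //.
set th := t / (1 + t).
have t1 : 1 + t != 0 by rewrite gt_eqF // ltr_pwDl.
have th0 : 0 <= th by rewrite divr_ge0 // addr_ge0.
have th1 : th <= 1 by rewrite ler_pdivrMr ?ltr_pwDl // mul1r lerDr.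
have thE : th * (1 + t) = t by rewrite /th mulfVK.
have pE : p = (1 - th) *: (p + h) + th *: b.
  apply/rowP => j; rewrite !mxE /th; field; rewrite tp t1 //.
have H := Hconv (p + h) b th th0 th1; rewrite -pE in H.
have H2 : g p <= (1 - th) * g (p + h) + th * cpM p.
  apply: le_trans H _; rewrite lerD2l; exact: ler_wpM2l.
have e1 : 1 - th = (1 + t)^-1 by rewrite /th; field.
rewrite e1 in H2.
have tp1 : 0 < 1 + t by rewrite ltr_pwDl.
have H3 : (1 + t) * g p <= g (p + h) + t * cpM p.
  have -> : g (p + h) + t * cpM p = (1 + t) * ((1 + t)^-1 * g (p + h) + th * cpM p).
    rewrite [RHS]mulrDr !(mulrA (1 + t)) mulfV // mul1r; congr (_ + _); field; exact: t1.
  by rewrite ler_pM2l.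
lra.
Qed.

End Convex.
Section Topo.
Variables (R : realType) (d : nat) (g : 'rV[R]_d -> R).
Hypothesis Hconv : convex_fun g.
Implicit Types (u v w x y z p h : 'rV[R]_d).

Lemma lsc_nbhs p (c : R) : c < g p ->
  exists2 e : R, 0 < e & forall w, `|p - w| < e -> c < g w.
Proof.
move=> cp.
have [gp _] := @cpM_ge _ _ g p.
set M := @cpM _ _ g p in gp *.
set D := M - g p.
have D0 : 0 <= D by rewrite subr_ge0.
set K : R := d%:R + 1.
have K0 : 0 < K by rewrite ltr_pwDr.
set del := (g p - c) / (2 * (D + 1)).
have del0 : 0 < del by rewrite divr_gt0 ?mulr_gt0 ?subr_gt0 // ltr_pwDr.
have delD : del * D <= (g p - c) / 2.
  have E : del * (2 * (D + 1)) = g p - c.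
    rewrite /del mulfVK // mulf_neq0 // gt_eqF // ltr_pwDr //.
  nra.
exists (Num.min 1 del / K); first by rewrite divr_gt0 // lt_min ltr01 del0.
move=> w pw.
have := @lsc_lower _ _ g Hconv p (w - p).
set t := \sum_i `|(w - p) ord0 i|.
have tle : t <= Num.min 1 del.
  apply: le_trans (@l1_le _ _ (w - p)) _.
  rewrite distrC in pw.
  have : d%:R * `|w - p| <= K * `|w - p|.
    by rewrite ler_wpM2r // /K lerDl.
  have : K * `|w - p| <= Num.min 1 del.
    by rewrite -ler_pdivlMl // mulrC ltW // mulrC.
  lra.
have t1 : t <= 1 by apply: le_trans tle _; rewrite ge_min lexx.
have tdel : t <= del by apply: le_trans tle _; rewrite ge_min lexx orbT.
have t0 : 0 <= t by apply: sumr_ge0.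
have -> : p + (w - p) = w by rewrite addrC subrK.
move/(_ t1); rewrite -/M => H.
have : t * D <= del * D by rewrite ler_wpM2r.
rewrite /D in H delD *; lra.
Qed.

End Topo.
Section Exist.
Variables (R : realType) (d : nat) (g : 'rV[R]_d -> R).
Hypothesis Hconv : convex_fun g.
Implicit Types (u v w x y z p h : 'rV[R]_d).

Lemma enorm_rev (a b : 'rV[R]_d) : `|enorm a - enorm b| <= enorm (a - b).
Proof.
rewrite ler_norml; apply/andP; split.
  have := enorm_triangle (b - a) a; rewrite subrK enormB; lra.
have := enorm_triangle (a - b) b; rewrite subrK; lra.
Qed.

Lemma cont_of (f : 'rV[R]_d -> R) :
  (forall p e, 0 < e -> exists2 del, 0 < del &
     forall w, `|p - w| < del -> `|f p - f w| < e) -> continuous f.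
Proof.
move=> H p; rewrite /continuous_at.
apply/(@cvgrPdist_lt _ R^o _ (nbhs p)) => e e0.
have [del d0 Hd] := H p e e0.
by apply/(@nbhs_normP _ 'rV[R]_d); exists del.
Qed.

Lemma enorm_cont x : continuous (fun w : 'rV[R]_d => enorm (x - w)).
Proof.
apply: cont_of => p e e0.
exists (e / (d%:R + 1)); first by rewrite divr_gt0 // ltr_pwDr.
move=> w pw.
apply: le_lt_trans (enorm_rev _ _) _.
have -> : x - p - (x - w) = w - p by rewrite opprB addrC addrA subrK.
apply: le_lt_trans (enorm_le_mx _) _.
rewrite distrC in pw.
have K0 : 0 < d%:R + 1 :> R by rewrite ltr_pwDr.
apply: le_lt_trans (_ : _ <= (d%:R + 1) * `|w - p|) _.
  by rewrite ler_wpM2r // lerDl.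
by rewrite mulrC -ltr_pdivlMr.
Qed.

Lemma nearest_exists (c : R) x x0 : g x0 <= c ->
  exists u, g u <= c /\ forall y, g y <= c -> enorm (x - u) <= enorm (x - y).
Proof.
move=> gx0.
set B := enorm (x0 - x).
set A := [set w : 'rV[R]_d | g w <= c /\ `|w - x| <= B]%classic.
have A0 : (A !=set0)%classic.
  by exists x0; split => //; apply: mxnorm_le_enorm.
have Acl : closed A.
  rewrite closedE => p /= Hp; apply: contrapT => nAp; apply: Hp.
  apply/(@nbhs_normP _ 'rV[R]_d).
  have [gp|gp] := leP (g p) c; last first.
    have [e e0 He] := @lsc_nbhs _ _ g Hconv _ _ gp.
    by exists e => // w /= pw [gw _]; have := He w pw; lra.
  have pB : B < `|p - x|.
    by rewrite ltNge; apply/negP => pB; apply: nAp.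
  exists (`|p - x| - B); first by rewrite /= subr_gt0.
  move=> w /= pw [_ wB].
  have := ler_normD (p - w) (w - x).
  rewrite addrA subrK; lra.
have Abd : (bounded_set A)%classic.
  exists (`|x| + B); split; first exact: num_real.
  move=> M HM w [_ wB].
  have := ler_normD (w - x) x; rewrite subrK /=; lra.
have Acp : compact A by apply: bounded_closed_compact.
have [u uA umin] := EVT_min_rV A0 Acp (continuous_subspaceT (A:=A) (enorm_cont x)).
move: uA; rewrite inE => -[gu uB].
exists u; split => // y gy.
have [yB|yB] := leP `|y - x| B.
  by apply: umin; rewrite inE.
have h : enorm (x - u) <= enorm (x - x0).
  by apply: umin; rewrite inE; split => //; apply: mxnorm_le_enorm.
have h2 : enorm (x - x0) = B by rewrite enormB.
have h3 : `|y - x| <= enorm (x - y) by rewrite enormB; apply: mxnorm_le_enorm.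
lra.
Qed.

End Exist.
Section EB.
Variables (R : realType) (d : nat) (g : 'rV[R]_d -> R) (sigma eps : R).
Hypothesis Hconv : convex_fun g.
Hypothesis HA4 : forall x s, g x = - eps -> subgrad g x s -> sigma <= enorm s.
Implicit Types (u v w x y z p h : 'rV[R]_d).

Lemma seg_below a b (c : R) : g a < c ->
  exists t : R, [/\ 0 < t, t <= 1 & g (a + t *: (b - a)) <= c].
Proof.
move=> ga.
have [gb|gb] := leP (g b) c.
  by exists 1; split => //; rewrite scale1r addrC subrK.
set t := (c - g a) / (g b - g a).
have den : 0 < g b - g a by rewrite subr_gt0; apply: lt_trans gb.
have t0 : 0 < t by rewrite divr_gt0 // subr_gt0.
have t1 : t <= 1 by rewrite ler_pdivrMr // mul1r lerD2r ltW.
have tE : t * (g b - g a) = c - g a by rewrite /t divfK // gt_eqF.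
exists t; split => //.
rewrite comb_eq; apply: le_trans (Hconv _ _ _ (ltW t0) t1) _.
nra.
Qed.

Lemma eb_eps x x0 : g x0 = - eps -> - eps < g x ->
  exists u, g u <= - eps /\ sigma * enorm (x - u) <= g x + eps.
Proof.
move=> gx0 gx.
have gx0' : g x0 <= - eps by rewrite gx0.
have [u [gu near]] := @nearest_exists _ _ g Hconv (- eps) x x0 gx0'.
set n := x - u.
have Cconv : forall y, g y <= - eps -> forall t, 0 < t -> t <= 1 ->
    g (u + t *: (y - u)) <= - eps.
  move=> y gy t t0 t1; rewrite comb_eq.
  apply: le_trans (Hconv _ _ _ (ltW t0) t1) _; nra.
have V := nearest_var (fun y => g y <= - eps) x u Cconv near.
have nE : forall t, dotv n (t *: n) = t * enorm n ^+ 2.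
  by move=> t; rewrite dotvZr enorm_sq.
have xu : x != u by apply/eqP => xu; move: gx; rewrite xu; lra.
have n2 : 0 < enorm n ^+ 2.
  rewrite lt_def sqr_ge0 andbT sqrf_eq0; apply/eqP => /enorm_eq0 /eqP.
  by rewrite subr_eq0 (negbTE xu).
have guE : g u = - eps.
  apply/eqP; rewrite eq_le gu /=; rewrite leNgt; apply/negP => gue.
  have [t [t0 t1 gz]] := seg_below _ x _ gue.
  have := V _ gz.
  have -> : u + t *: (x - u) - u = t *: n by rewrite addrAC subrr add0r.
  rewrite -/n nE; nra.
have zero_case : forall y, dotv n (y - u) = 0 -> 0 <= g y + eps.
  move=> y ty; rewrite leNgt; apply/negP => gy.
  have gy' : g y < - eps by lra.
  have [t [t0 t1 gz]] := seg_below _ (y + n) _ gy'.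
  have := V _ gz.
  have -> : y + t *: (y + n - y) - u = (y - u) + t *: n.
    by rewrite (addrC y n) addrK addrAC.
  rewrite dotvDr ty nE; nra.
pose S := [set (g y + eps) / dotv n (y - u) | y in [set y | 0 < dotv n (y - u)]]%classic.
set lam := inf S.
have Sx : S ((g x + eps) / dotv n (x - u)).
  by exists x => //=; rewrite -/n -enorm_sq.
have S0 : lbound S 0.
  move=> r [y /= ty <-]; apply: divr_ge0; last exact: ltW.
  have : ~ (g y <= - eps) by move=> gy; have := V _ gy; lra.
  move/negP; rewrite -ltNge; lra.
have Slb : has_lbound S by exists 0.
have lam0 : 0 <= lam by apply: lb_le_inf => //; exists ((g x + eps) / dotv n (x - u)).
have sub : forall y, - eps + lam * dotv n (y - u) <= g y.
  move=> y; set tau := dotv n (y - u).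
  have [tp|tn|tz] := ltgtP 0 tau.
  - have : lam <= (g y + eps) / tau by apply: ge_inf => //; exists y.
    rewrite ler_pdivlMr // => h; lra.
  - have key : (g y + eps) / tau <= lam.
      apply: lb_le_inf; first by exists ((g x + eps) / dotv n (x - u)).
      move=> r [y' /= tp' <-].
      set tau' := dotv n (y' - u) in tp' *.
      set th := - tau / (tau' - tau).
      have den : 0 < tau' - tau by lra.
      have thE : th * (tau' - tau) = - tau by rewrite /th divfK // gt_eqF.
      have th0 : 0 <= th by rewrite /th divr_ge0 // ?ltW // oppr_gt0.
      have th1 : th <= 1 by rewrite /th ler_pdivrMr // mul1r; lra.
      have hz : dotv n ((y + th *: (y' - y)) - u) = 0.
        have -> : y + th *: (y' - y) - u = (y - u) + th *: ((y' - u) - (y - u)).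
          by rewrite opprB addrA subrK addrAC.
        rewrite dotvDr dotvZr (dotvBr (y' - u) (y - u)) -/tau -/tau'; nra.
      have z0 := zero_case _ hz.
      move: z0; rewrite comb_eq => z0.
      have hc := Hconv y y' th th0 th1.
      have h1 : 0 <= (1 - th) * (g y + eps) + th * (g y' + eps) by lra.
      have h2 := mulr_ge0 (ltW den) h1.
      have e : (tau' - tau) * ((1 - th) * (g y + eps) + th * (g y' + eps)) =
          tau' * (g y + eps) - tau * (g y' + eps).
        by rewrite /th; field; rewrite gt_eqF.
      have key0 : 0 <= tau' * (g y + eps) - tau * (g y' + eps) by rewrite -e.
      set al := (g y + eps) / tau; set be := (g y' + eps) / tau'.
      have alE : g y + eps = al * tau by rewrite /al divfK // lt_eqF.
      have beE : g y' + eps = be * tau' by rewrite /be divfK // gt_eqF.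
      rewrite alE beE in key0.
      have : 0 <= (tau * tau') * (al - be) by nra.
      rewrite nmulr_rge0 ?subr_le0 //; nra.
    set al := (g y + eps) / tau in key.
    have alE : g y + eps = al * tau by rewrite /al divfK // lt_eqF.
    nra.
  - by rewrite -tz mulr0; have := zero_case y (esym tz); lra.
have sg : subgrad g u (lam *: n).
  by move=> y; rewrite guE dotvZl; exact: sub.
have := HA4 _ _ guE sg; rewrite enormZ ger0_norm // => sl.
have := sub x; rewrite -/n -enorm_sq => sx.
exists u; split => //.
have en0 : 0 <= enorm n := enorm_ge0 n.
nra.
Qed.

End EB.
Section Final.
Variables (R : realType) (d : nat).
Implicit Types (u v w x y z p h : 'rV[R]_d).

Lemma edist_le w (C : set 'rV[R]_d) y : C y -> edist w C <= enorm (w - y).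
Proof.
move=> Cy.
have Hlb : has_lbound [set enorm (w - y) | y in C]%classic.
  by exists 0 => r [y' _ <-]; exact: enorm_ge0.
by apply: (ge_inf Hlb); exists y.
Qed.

Lemma edist_ge (C : set 'rV[R]_d) w (r : R) : (exists y, C y) ->
  (forall y, C y -> r <= enorm (w - y)) -> r <= edist w C.
Proof.
move=> [y0 Cy0] H; apply: lb_le_inf; first by exists (enorm (w - y0)), y0.
by move=> r' [y Cy <-]; exact: H.
Qed.

Lemma edist_ge0 (C : set 'rV[R]_d) w : (exists y, C y) -> 0 <= edist w C.
Proof. by move=> C0; apply: edist_ge => // y _; exact: enorm_ge0. Qed.

End Final.
Arguments edist_le {R d} w {C y}. Arguments edist_ge {R d}. Arguments edist_ge0 {R d}.

Theorem lemma2 (R : realType) (d : nat) (g : 'rV[R]_d -> R) (Rad Gg sigma eps rho : R)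
  (Hconv : convex_fun g)
  (HRad : 0 < Rad)
  (HXsub : forall x, g x <= 0 -> enorm x <= Rad)
  (HGg : 0 < Gg)
  (HA3 : forall x s, enorm x <= Rad -> subgrad g x s -> enorm s <= Gg)
  (Hsigma : 0 < sigma) (Heps : 0 < eps)
  (HA4ne : exists x, g x = - eps)
  (HA4 : forall x s, g x = - eps -> subgrad g x s -> sigma <= enorm s)
  (Hrho0 : 0 <= rho) (Hrho1 : rho <= eps)
  (x s xp : 'rV[R]_d)
  (Hx : enorm x <= Rad) (Hs : subgrad g x s) (Hs0 : s != 0)
  (Hxp : is_proj (eball Rad) (x - (pospart (g x + rho) / enorm s ^+ 2) *: s) xp) :
  edist xp (sublevel g (- rho)) ^+ 2
    <= (1 - sigma ^+ 2 / Gg ^+ 2) * edist x (sublevel g (- rho)) ^+ 2.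
Proof.
set C := sublevel g (- rho).
have [x0 gx0] := HA4ne.
have C0 : exists y, C y by exists x0; rewrite /C /sublevel /= gx0; lra.
set a := g x + rho; set p := pospart a; set ns := enorm s.
have ns0 : 0 < ns.
  rewrite lt_def enorm_ge0 andbT; apply/eqP => /enorm_eq0 s0.
  by rewrite s0 eqxx in Hs0.
have nsG : ns <= Gg := HA3 x s Hx Hs.
have p0 : 0 <= p by rewrite /p /pospart le_max lexx orbT.
have pa : a <= p by rewrite /p /pospart le_max lexx.
have ppa : p * p = p * a.
  by rewrite /p /pospart; case: leP => ha //; rewrite !mul0r.
set k := p / ns ^+ 2.
have ns2 : 0 < ns ^+ 2 by rewrite exprn_gt0.
have kE : k * ns ^+ 2 = p by rewrite /k divfK // gt_eqF.
have k0 : 0 <= k by rewrite /k divr_ge0 // ltW.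
set z := x - k *: s.
have polyak : forall y, C y -> enorm (z - y) ^+ 2 <= enorm (x - y) ^+ 2 - k * p.
  move=> y Cy.
  have sg := Hs y.
  have hd : dotv (x - y) s >= a.
    have : dotv s (y - x) = - dotv (x - y) s by rewrite dotvC -dotvNl opprB.
    rewrite /C /sublevel /= in Cy; rewrite /a; lra.
  have -> : z - y = (x - y) - k *: s by rewrite /z addrAC.
  rewrite [X in X <= _]enormB_sq dotvZr enormZ ger0_norm // -/ns exprMn.
  nra.
have ballconv : forall y, eball Rad y -> forall t, 0 < t -> t <= 1 ->
    eball Rad (xp + t *: (y - xp)).
  move=> y; rewrite /eball /= => yR t t0 t1; rewrite comb_eq.
  apply: le_trans (enorm_triangle _ _) _.
  rewrite !enormZ (ger0_norm (ltW t0)) ger0_norm; last by rewrite subr_ge0.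
  case: Hxp => xpR _; rewrite /eball /= in xpR; nra.
have proj : forall y, C y -> enorm (xp - y) <= enorm (z - y).
  move=> y Cy; case: Hxp => _ Hn.
  apply: (nearest_nonexp (eball Rad) z xp ballconv Hn).
  rewrite /eball /=; apply: HXsub; rewrite /C /sublevel /= in Cy; lra.
set Dp := edist xp C; set Dx := edist x C.
have Dp0 : 0 <= Dp by apply: edist_ge0.
have Dx0 : 0 <= Dx by apply: edist_ge0.
set K := p ^+ 2 / Gg ^+ 2.
have K0 : 0 <= K by rewrite /K divr_ge0 // sqr_ge0.
have Kkp : K <= k * p.
  have -> : k * p = p ^+ 2 / ns ^+ 2 by rewrite /k mulrAC expr2.
  rewrite /K ler_wpM2l ?sqr_ge0 //.
  rewrite lef_pV2 ?posrE ?exprn_gt0 //; apply: sq_le => //; exact: ltW.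
have step : Dp ^+ 2 + K <= Dx ^+ 2.
  set r := Num.sqrt (Dp ^+ 2 + K).
  have r2 : r ^+ 2 = Dp ^+ 2 + K by rewrite sqr_sqrtr // addr_ge0 ?sqr_ge0.
  have r0 : 0 <= r := sqrtr_ge0 _.
  have : r <= Dx.
    apply: edist_ge => // y Cy.
    apply: sq_le_inv; first exact: enorm_ge0.
    have h1 : Dp <= enorm (xp - y) := edist_le xp Cy.
    have h2 := proj y Cy.
    have h3 := sq_le Dp0 (le_trans h1 h2).
    have h4 := polyak y Cy.
    rewrite r2; lra.
  by move/(sq_le r0); rewrite r2.
have eb : sigma * Dx <= p.
  have [ha|ha] := leP a 0.
    have Cx : C x by rewrite /C /sublevel /=; rewrite /a in ha; lra.
    have := edist_le x Cx; rewrite subrr.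
    have -> : enorm (0 : 'rV[R]_d) = 0 by rewrite /enorm /dotv big1 ?sqrtr0 // => i _; rewrite mxE mul0r.
    move=> h; have : Dx <= 0 by [].
    nra.
  have gxe : - eps < g x by rewrite /a in ha; lra.
  have [u [gu hu]] := @eb_eps _ _ g sigma eps Hconv HA4 x x0 gx0 gxe.
  set t := (g x + rho) / (g x + eps).
  have ge : 0 < g x + eps by lra.
  have t0 : 0 < t by rewrite /t divr_gt0 //.
  have t1 : t <= 1 by rewrite /t ler_pdivrMr // mul1r; lra.
  have tE : t * (g x + eps) = g x + rho by rewrite /t divfK // gt_eqF.
  set y := x + t *: (u - x).
  have Cy : C y.
    rewrite /C /sublevel /= /y comb_eq.
    apply: le_trans (Hconv _ _ _ (ltW t0) t1) _; nra.
  have := edist_le x Cy.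
  have -> : x - y = - (t *: (u - x)) by rewrite /y opprD addrA subrr add0r.
  rewrite enormN enormZ (ger0_norm (ltW t0)) (enormB u x) => h.
  have ep : p = a by rewrite /p /pospart max_l // ltW.
  rewrite ep /a -tE.
  have := enorm_ge0 (x - u).
  nra.
have Gg2 : 0 < Gg ^+ 2 by rewrite exprn_gt0.
set iw := (Gg ^+ 2)^-1.
have iw0 : 0 <= iw by rewrite /iw invr_ge0 ltW.
have KE : K = p ^+ 2 * iw by [].
have sD : (sigma * Dx) ^+ 2 <= p ^+ 2 by apply: sq_le => //; rewrite mulr_ge0 // ltW.
have : (sigma * Dx) ^+ 2 * iw <= p ^+ 2 * iw by rewrite ler_wpM2r.
rewrite -KE => h.
have -> : (1 - sigma ^+ 2 / Gg ^+ 2) * Dx ^+ 2 = Dx ^+ 2 - (sigma * Dx) ^+ 2 * iw.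
  by rewrite /iw exprMn; ring.
lra.
Qed.
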